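(* Let $\tilde{A}\in\mathbb{Q}^{q\times n}$, $\tilde{b}\in\mathbb{Q}^{q}$ be the constraint data of the LP relaxation $P=\{x\in\mathbb{R}^n: \tilde{A}x\ge \tilde{b}\}=\{x: Ax\ge b,\ x\ge 0,\ x_j\le 1,\ j=1,\dots,p\}$ (with $A$ an $m\times n$ matrix, $q=m+n+p$, $Q=\{1,\dots,q\}$), and let $T$ be a finite index set with matrices $D^t\in\mathbb{Q}^{r\times n}$ and vectors $d_0^t\in\mathbb{Q}^r$ for $t\in T$. Let $\bar{w}=(\bar{\alpha},\bar{\beta},\{\bar{u}^t,\bar{v}^t\}_{t\in T})$ be a basic feasible solution of the CGLP system (described in the context). Let $N=N(\bar{u}):=\{j\in Q: \bar{u}^t_j>0 \text{ for some } t\in T\}$ and let $\tilde{A}_N$ be the $|N|\times n$ submatrix of $\tilde{A}$ formed by the rows indexed by $N$. Then $\bar{w}$ is regular if and only if $\tilde{A}_N$ has full row rank, i.e. $\operatorname{rank}(\tilde{A}_N)=|N|$.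
   Context: The CGLP system consists of the variables $\alpha\in\mathbb{R}^n$, $\beta\in\mathbb{R}$, $u^t\in\mathbb{R}^q$, $v^t\in\mathbb{R}^r$ ($t\in T$, row vectors) and the constraints: $\alpha-u^t\tilde{A}-v^tD^t=0$ for all $t\in T$; $\beta-u^t\tilde{b}-v^td_0^t=0$ for all $t\in T$; $\sum_{t\in T}\sum_{i=1}^q u^t_i+\sum_{t\in T}\sum_{i=1}^r v^t_i=1$; $u^t\ge 0$, $v^t\ge 0$ for all $t\in T$. (These describe valid inequalities $\alpha x\ge\beta$ for the disjunctive set $\bigvee_{t\in T}\{x:\tilde{A}x\ge\tilde{b},\ D^tx\ge d_0^t\}$.) Note that the rows of $\tilde{A}$ include the $n$ rows of the identity matrix $I_n$ (from $x\ge 0$). A feasible basic solution $(\alpha,\beta,\{u^t,v^t\}_{t\in T})$ of this system is called regular if there exists a set $J\subseteq Q$ with $|J|=n$ such that the $n\times n$ submatrix $\tilde{A}_J$ (rows indexed by $J$) is nonsingular and $u^t_j=0$ for all $j\notin J$ and all $t\in T$; otherwise it is called irregular. *)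

(* Defs.v *)
From HB Require Import structures.
From mathcomp Require Import all_boot all_order all_algebra.
Set Implicit Arguments. Unset Strict Implicit. Unset Printing Implicit Defensive.
Import Order.TTheory GRing.Theory Num.Theory.
Local Open Scope ring_scope.

(* Rows encoding x_j <= 1 (j < p) as -x_j >= -1. *)
Definition upper_rows (p n : nat) : 'M[rat]_(p, n) :=
  \matrix_(i < p, j < n) - ((nat_of_ord i == nat_of_ord j)%:R).

Definition Atil (m n p : nat) (A : 'M[rat]_(m, n)) : 'M[rat]_(m + (n + p), n) :=
  col_mx A (col_mx 1%:M (upper_rows p n)).

Definition btil (m n p : nat) (b : 'cV[rat]_m) : 'cV[rat]_(m + (n + p)) :=
  col_mx b (col_mx 0 (const_mx (-1))).

Definition cglp_eqs (T : finType) (n q r : nat)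
  (At : 'M[rat]_(q, n)) (bt : 'cV[rat]_q)
  (D : T -> 'M[rat]_(r, n)) (d0 : T -> 'cV[rat]_r)
  (alpha : 'rV[rat]_n) (beta : rat) (u : T -> 'rV[rat]_q) (v : T -> 'rV[rat]_r) : Prop :=
  (forall t, alpha - u t *m At - v t *m D t = 0) /\
  (forall t, beta - (u t *m bt) 0 0 - (v t *m d0 t) 0 0 = 0) /\
  (\sum_(t : T) \sum_(i < q) u t 0 i + \sum_(t : T) \sum_(i < r) v t 0 i = 1).

Definition cglp_feasible (T : finType) (n q r : nat)
  (At : 'M[rat]_(q, n)) (bt : 'cV[rat]_q)
  (D : T -> 'M[rat]_(r, n)) (d0 : T -> 'cV[rat]_r)
  (alpha : 'rV[rat]_n) (beta : rat) (u : T -> 'rV[rat]_q) (v : T -> 'rV[rat]_r) : Prop :=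
  cglp_eqs At bt D d0 alpha beta u v /\
  (forall t i, 0 <= u t 0 i) /\ (forall t i, 0 <= v t 0 i).

(* Basic feasible solution: feasible, and the unique solution of the linear
   system formed by all equality constraints together with all nonnegativity
   constraints active (tight) at the point. *)
Definition cglp_basic_feasible (T : finType) (n q r : nat)
  (At : 'M[rat]_(q, n)) (bt : 'cV[rat]_q)
  (D : T -> 'M[rat]_(r, n)) (d0 : T -> 'cV[rat]_r)
  (alpha : 'rV[rat]_n) (beta : rat) (u : T -> 'rV[rat]_q) (v : T -> 'rV[rat]_r) : Prop :=
  cglp_feasible At bt D d0 alpha beta u v /\
  forall alpha' beta' (u' : T -> 'rV[rat]_q) (v' : T -> 'rV[rat]_r),
    cglp_eqs At bt D d0 alpha' beta' u' v' ->
    (forall t i, u t 0 i = 0 -> u' t 0 i = 0) ->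
    (forall t i, v t 0 i = 0 -> v' t 0 i = 0) ->
    [/\ alpha' = alpha, beta' = beta, u' = u & v' = v].

Definition subrows (q n : nat) (J : {set 'I_q}) (M : 'M[rat]_(q, n)) : 'M[rat]_(#|J|, n) :=
  \matrix_(i < #|J|) row (enum_val i) M.

Definition cglp_regular (T : finType) (n q r : nat) (At : 'M[rat]_(q, n))
  (u : T -> 'rV[rat]_q) : Prop :=
  exists J : {set 'I_q}, exists e : #|J| = n,
    castmx (e, erefl n) (subrows J At) \in unitmx /\
    (forall j, j \notin J -> forall t, u t 0 j = 0).

Definition Nsupp (T : finType) (q : nat) (u : T -> 'rV[rat]_q) : {set 'I_q} :=
  [set j | [exists t, 0 < u t 0 j]].

(* Main.v *)
Require Import Defs.
From mathcomp Require Import all_boot all_order all_algebra.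
Set Implicit Arguments. Unset Strict Implicit. Unset Printing Implicit Defensive.
Import Order.TTheory GRing.Theory Num.Theory.
Local Open Scope ring_scope.

Section Sub.
Variables (q n : nat) (M : 'M[rat]_(q, n)).

Definition cw (S : {set 'I_q}) (w : 'rV[rat]_#|S|) : 'rV[rat]_q :=
  \row_j \sum_(i | enum_val i == j) w 0 i.

Definition rowc (S : {set 'I_q}) (c : 'rV[rat]_q) : 'rV[rat]_#|S| :=
  \row_i c 0 (enum_val i).

Lemma cwE (S : {set 'I_q}) w : w *m subrows S M = cw w *m M.
Proof.
rewrite !mulmx_sum_row.
rewrite (partition_big (fun i : 'I_#|S| => enum_val i) xpredT) //=.
apply: eq_bigr => j _; rewrite mxE scaler_suml.
apply: eq_bigr => i /eqP <-; by rewrite rowK.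
Qed.

Lemma cw_sub (S : {set 'I_q}) (c : 'rV[rat]_q) : (forall j, j \notin S -> c 0 j = 0) ->
  c = cw (rowc S c).
Proof.
move=> Hc; apply/rowP => j; rewrite !mxE.
case: (boolP (j \in S)) => Hj.
  rewrite (big_pred1 (enum_rank_in Hj j)); last first.
    move=> i /=; apply/eqP/eqP => [Hi|->]; last by rewrite enum_rankK_in.
    by apply: enum_val_inj; rewrite enum_rankK_in.
  by rewrite /rowc mxE enum_rankK_in.
rewrite Hc // big1 // => i /eqP Hi; exfalso; move: Hj; by rewrite -Hi enum_valP.
Qed.

Lemma cw0 (S : {set 'I_q}) : cw (0 : 'rV_#|S|) = 0.
Proof. by apply/rowP => j; rewrite !mxE big1 // => i _; rewrite mxE. Qed.

Lemma free_subrows (S : {set 'I_q}) : row_free (subrows S M) <->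
  (forall c : 'rV[rat]_q, (forall j, j \notin S -> c 0 j = 0) -> c *m M = 0 -> c = 0).
Proof.
split.
  move=> Hf c Hc H0.
  have E := cw_sub Hc.
  have Hw : rowc S c *m subrows S M = 0 *m subrows S M.
    by rewrite cwE -E H0 mul0mx.
  by rewrite E (row_free_inj Hf Hw) cw0.
move=> H; rewrite -kermx_eq0; apply/eqP/row_matrixP => i; rewrite row0.
set w := row i _.
have Hw : w *m subrows S M = 0 by rewrite /w -row_mul mulmx_ker row0.
have Hc : cw w = 0.
  apply: H; last by rewrite -cwE.
  move=> j Hj; rewrite mxE big1 // => k /eqP Hk; exfalso; move: Hj; by rewrite -Hk enum_valP.
clearbody w.
apply/rowP => k; rewrite [RHS]mxE.
have := congr1 (fun x : 'rV_q => x 0 (enum_val k)) Hc; rewrite /= !mxE.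
rewrite (big_pred1 k) // => i0; by rewrite /= (inj_eq enum_val_inj).
Qed.

End Sub.

Lemma cast_unit k n (e : k = n) (X : 'M[rat]_(k, n)) :
  row_free X -> castmx (e, erefl n) X \in unitmx.
Proof. by move=> H; rewrite -row_free_unit row_free_castmx. Qed.

Theorem theorem3 (m n p r : nat) (hp : (p <= n)%N) (T : finType)
  (A : 'M[rat]_(m, n)) (b : 'cV[rat]_m)
  (D : T -> 'M[rat]_(r, n)) (d0 : T -> 'cV[rat]_r)
  (alpha : 'rV[rat]_n) (beta : rat)
  (u : T -> 'rV[rat]_(m + (n + p))) (v : T -> 'rV[rat]_r) :
  cglp_basic_feasible (Atil p A) (btil n p b) D d0 alpha beta u v ->
  (cglp_regular r (Atil p A) u <->
   \rank (subrows (Nsupp u) (Atil p A)) = #|Nsupp u|).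
Proof.
move=> [[_ [Hu _]] _].
set At := Atil p A; set N := Nsupp u.
split.
  move=> [J [e [Hunit Hoff]]].
  have HJ : row_free (subrows J At).
    by rewrite -(row_free_castmx _ (e, erefl n)) row_free_unit.
  apply/eqP; apply/free_subrows => c Hc; apply: (proj1 (free_subrows _ _) HJ) => j Hj.
  apply: Hc; rewrite inE; apply/negP => /existsP [t Ht].
  by rewrite Hoff // ltxx in Ht.
move=> /eqP HN.
pose P (S : {set 'I_(m + (n + p))}) := row_free (subrows S At) && (N \subset S).
have PN : P N by rewrite /P /row_free HN subxx.
case: (@arg_maxnP _ N P (fun S => #|S|) PN) => J /andP [HJf HNJ] Hmax.
have Hle : (#|J| <= n)%N.
  by move/eqP: HJf => <-; apply: rank_leq_col.
have Heq : #|J| = n.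
  apply/eqP; rewrite eqn_leq Hle /=; rewrite leqNgt; apply/negP => Hlt.
  have : ~~ row_full (subrows J At).
    by rewrite /row_full; move/eqP: HJf => ->; rewrite neq_ltn Hlt.
  rewrite -sub1mx => /row_subPn [k Hk].
  pose j0 : 'I_(m + (n + p)) := rshift m (lshift p k).
  have Hrow : row j0 At = row k 1%:M.
    by apply/rowP => l; rewrite [LHS]mxE /At /Atil /j0 col_mxEd col_mxEu [RHS]mxE.
  have Hj0 : j0 \notin J.
    apply/negP => Hj; move: Hk; rewrite -Hrow.
    by rewrite -(enum_rankK_in Hj Hj) -(rowK (fun i => row (enum_val i) At)) row_sub.
  have PS : P (j0 |: J).
    rewrite /P (subset_trans HNJ (subsetUr _ _)) andbT.
    apply/free_subrows => c Hc H0.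
    pose a := c 0 j0.
    pose c' := c - a *: delta_mx 0 j0.
    have Hc' : forall j, j \notin J -> c' 0 j = 0.
      move=> j Hj; rewrite !mxE.
      case: (eqVneq j j0) => [->|Hne]; first by rewrite /a eqxx mulr1 subrr.
      rewrite Hc; last by rewrite in_setU1 negb_or Hne.
      by rewrite andbF mulr0 subrr.
    have Hdec : c *m At = c' *m At + a *: row j0 At.
      by rewrite /c' mulmxBl -scalemxAl -rowE subrK.
    have Ha : a = 0.
      apply/eqP; apply: contraT => Hna; case/negP: Hk; rewrite -Hrow.
      have -> : row j0 At = - a^-1 *: (c' *m At).
        apply: (@scalerI _ _ a) => //.
        rewrite scalerA mulrN mulfV // scaleN1r.
        by apply/eqP; rewrite -addr_eq0 addrC -Hdec H0.
      apply: scalemx_sub.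
      by rewrite (cw_sub Hc') -cwE submxMl.
    have : c' = 0 by apply: (proj1 (free_subrows _ _) HJf); [exact: Hc' | rewrite -H0 Hdec Ha scale0r addr0].
    by rewrite /c' Ha scale0r subr0.
  have := Hmax _ PS; rewrite cardsU1 Hj0 => H1; by move: H1; rewrite /= ltnn.
exists J, Heq; split; first exact: cast_unit.
move=> j Hj t; apply/eqP; rewrite eq_le Hu andbT leNgt; apply/negP => Hpos.
move/negP: Hj; apply; apply: (subsetP HNJ); rewrite inE; apply/existsP; by exists t.
Qed.
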